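(* Suppose $A$ is indecomposable. Let $K\subsetneq I$ be such that the subgroup $W_K=\langle r_i:i\in K\rangle$ of $W^v$ is infinite, and let $u\in\mathbb A$ satisfy $\alpha_i(u)=0$ for $i\in K$ and $\alpha_i(u)>0$ for $i\in I\setminus K$. Then there exists $w\in W^v$ such that the orbit $W_K\cdot w(u)$ is infinite (equivalently, the set of vectorial faces $W_K\cdot w\cdot F^v$ is infinite, where $F^v=\{v:\alpha_i(v)=0\ (i\in K),\ \alpha_i(v)>0\ (i\notin K)\}$ is the vectorial face containing $u$, whose fixer in $W^v$ is $W_K$).
   Context: $I$ finite, $A=(a_{i,j})_{i,j\in I}$ a generalized Cartan matrix ($a_{i,i}=2$, $a_{i,j}\in\mathbb Z_{\le0}$ for $i\ne j$, $a_{i,j}=0\iff a_{j,i}=0$); $A$ is indecomposable if the graph on $I$ with edges $\{i,j\}$ for $a_{i,j}\neq0$ is connected. $\mathbb A$ is a finite-dimensional real vector space with linearly independent families $(\alpha_i)_{i\in I}\subset\mathbb A^*$, $(\alpha_i^\vee)_{i\in I}\subset\mathbb A$ with $\alpha_j(\alpha_i^\vee)=a_{i,j}$; $r_i(v)=v-\alpha_i(v)\alpha_i^\vee$; $W^v=\langle r_i:i\in I\rangle$. *)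

(* Defs.v *)
From HB Require Import structures.
From mathcomp Require Import all_boot all_order all_algebra.
Set Implicit Arguments. Unset Strict Implicit. Unset Printing Implicit Defensive.
Import Order.TTheory GRing.Theory Num.Theory.
Local Open Scope ring_scope.

(* The real vector space A is modelled as 'rV[R]_n (row vectors);
   linear forms on it are column vectors 'cV[R]_n, evaluated by [pairing]. *)
Definition pairing (R : fieldType) (n : nat) (a : 'cV[R]_n) (v : 'rV[R]_n) : R :=
  (v *m a) 0 0.

Definition is_GCM (I : finType) (A : I -> I -> int) : Prop :=
  [/\ forall i, A i i = 2%:Z,
      forall i j, i != j -> A i j <= 0
    & forall i j, A i j = 0 <-> A j i = 0].

Definition indecomposable (I : finType) (A : I -> I -> int) : Prop :=
  forall i j : I, connect (fun x y => A x y != 0) i j.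

(* Matrix of the reflection r_i(v) = v - alpha_i(v) alpha_i^vee, acting on
   row vectors by right multiplication: v *m refl_mx a c = v - pairing a v *: c. *)
Definition refl_mx (R : fieldType) (n : nat) (a : 'cV[R]_n) (c : 'rV[R]_n)
  : 'M[R]_n := 1%:M - a *m c.

(* The subgroup W_K generated by the reflections r_i, i in K: the set of all
   finite products of generators (each r_i is an involution, so this is the
   generated subgroup). *)
Definition W_sub (R : fieldType) (n : nat) (I : finType)
  (alpha : I -> 'cV[R]_n) (coroot : I -> 'rV[R]_n) (K : {set I}) (M : 'M[R]_n)
  : Prop :=
  exists s : seq I, all (fun i => i \in K) s /\
    M = \big[mulmx/1%:M]_(i <- s) refl_mx (alpha i) (coroot i).

Definition finite_pred (T : eqType) (P : T -> Prop) : Prop :=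
  exists l : seq T, forall x, P x -> x \in l.

(* Main.v *)
Require Import Defs.
From HB Require Import structures.
From mathcomp Require Import all_boot all_order all_algebra.
From Stdlib Require Import ClassicalEpsilon Classical_Prop.
Import Order.TTheory GRing.Theory Num.Theory.
Set Implicit Arguments. Unset Strict Implicit. Unset Printing Implicit Defensive.
Local Open Scope ring_scope.

Lemma mulmx_refl (R : fieldType) (n : nat) (a : 'cV[R]_n) (c v : 'rV[R]_n) :
  v *m refl_mx a c = v - pairing a v *: c.
Proof.
rewrite /refl_mx /pairing mulmxBr mulmx1 mulmxA.
by rewrite {1}(mx11_scalar (v *m a)) mul_scalar_mx.
Qed.

Lemma pairingD (R : fieldType) (n : nat) (a : 'cV[R]_n) (v w : 'rV[R]_n) :
  pairing a (v + w) = pairing a v + pairing a w.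
Proof. by rewrite /pairing mulmxDl mxE. Qed.

Lemma pairingZ (R : fieldType) (n : nat) (a : 'cV[R]_n) (s : R) (v : 'rV[R]_n) :
  pairing a (s *: v) = s * pairing a v.
Proof. by rewrite /pairing -scalemxAl mxE. Qed.

Lemma pairingN (R : fieldType) (n : nat) (a : 'cV[R]_n) (v : 'rV[R]_n) :
  pairing a (- v) = - pairing a v.
Proof. by rewrite /pairing mulNmx mxE. Qed.

Lemma pairingB (R : fieldType) (n : nat) (a : 'cV[R]_n) (v w : 'rV[R]_n) :
  pairing a (v - w) = pairing a v - pairing a w.
Proof. by rewrite pairingD pairingN. Qed.

Lemma big_mulmx_rcons (R : fieldType) (n : nat) (I : Type) (F : I -> 'M[R]_n) s k :
  \big[mulmx/1%:M]_(i <- rcons s k) F i = (\big[mulmx/1%:M]_(i <- s) F i) *m F k.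
Proof.
elim: s => [|a s IH] /=; first by rewrite !big_cons !big_nil mulmx1 mul1mx.
by rewrite !big_cons IH mulmxA.
Qed.

Lemma W_sub1 (R : fieldType) (n : nat) (I : finType) alpha coroot (K : {set I}) :
  @W_sub R n I alpha coroot K 1%:M.
Proof. by exists [::]; rewrite big_nil. Qed.

Lemma W_subL (R : fieldType) (n : nat) (I : finType) alpha coroot (K : {set I}) x k :
  k \in K -> @W_sub R n I alpha coroot K x ->
  W_sub alpha coroot K (refl_mx (alpha k) (coroot k) *m x).
Proof.
move=> kK [s [Hs ->]]; exists (k :: s); split; first by rewrite /= kK.
by rewrite big_cons.
Qed.

Lemma W_subR (R : fieldType) (n : nat) (I : finType) alpha coroot (K : {set I}) x k :
  k \in K -> @W_sub R n I alpha coroot K x ->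
  W_sub alpha coroot K (x *m refl_mx (alpha k) (coroot k)).
Proof.
move=> kK [s [Hs ->]]; exists (rcons s k); split.
  by rewrite all_rcons kK Hs.
by rewrite big_mulmx_rcons.
Qed.

Lemma W_sub_fix (R : fieldType) (n : nat) (I : finType) alpha coroot (K : {set I}) x
  (y : 'rV[R]_n) :
  (forall k, k \in K -> pairing (alpha k) y = 0) ->
  @W_sub R n I alpha coroot K x -> y *m x = y.
Proof.
move=> Hy [s [Hs ->]]; elim: s Hs => [|a s IH] /=; first by rewrite big_nil mulmx1.
case/andP=> aK Hs; rewrite big_cons mulmxA mulmx_refl Hy // scale0r subr0.
exact: IH.
Qed.

Definition FinM (R : fieldType) (n p : nat) (P : 'M[R]_n -> Prop) (Y : 'M[R]_(p, n)) :=
  finite_pred (fun Z : 'M[R]_(p, n) => exists x, P x /\ Z = Y *m x).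

Lemma FinM0 (R : fieldType) (n p : nat) P : @FinM R n p P 0.
Proof. by exists [:: 0] => Z [x [_ ->]]; rewrite mul0mx inE. Qed.

Lemma FinMD (R : fieldType) (n p : nat) P (Y1 Y2 : 'M[R]_(p, n)) :
  FinM P Y1 -> FinM P Y2 -> FinM P (Y1 + Y2).
Proof.
move=> [l1 H1] [l2 H2]; exists [seq a + b | a <- l1, b <- l2] => Z [x [Px ->]].
rewrite mulmxDl; apply: allpairs_f; [apply: H1 | apply: H2]; by exists x.
Qed.

Lemma FinML (R : fieldType) (n p q : nat) P (M : 'M[R]_(q, p)) (Y : 'M[R]_(p, n)) :
  FinM P Y -> FinM P (M *m Y).
Proof.
move=> [l H]; exists [seq M *m a | a <- l] => Z [x [Px ->]].
rewrite -mulmxA; apply: map_f; apply: H; by exists x.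
Qed.

Lemma FinMZ (R : fieldType) (n p : nat) P (s : R) (Y : 'M[R]_(p, n)) :
  FinM P Y -> FinM P (s *: Y).
Proof.
move=> [l H]; exists [seq s *: a | a <- l] => Z [x [Px ->]].
rewrite -scalemxAl; apply: map_f; apply: H; by exists x.
Qed.

Lemma FinM_rows (R : fieldType) (n p : nat) P (Y : 'M[R]_(p, n)) :
  (forall i, FinM P (row i Y)) -> FinM P Y.
Proof.
move=> H.
have -> : Y = \sum_(i < p) (delta_mx i 0 : 'M[R]_(p, 1)) *m row i Y.
  apply/matrixP => a b; rewrite summxE (bigD1 a) //= big1 ?addr0.
    by rewrite mxE big_ord1 !mxE !eqxx mul1r.
  move=> i /negbTE ia; rewrite mxE big_ord1 !mxE eq_sym ia /=.
  by rewrite mul0r.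
apply: (big_ind (FinM P)); [exact: FinM0 | exact: FinMD | ].
by move=> i _; apply: FinML.
Qed.

Lemma good_all (R : realFieldType) (n : nat) (I : finType)
  (A : I -> I -> int) (alpha : I -> 'cV[R]_n) (coroot : I -> 'rV[R]_n)
  (Hsym : forall i j, A i j = 0 <-> A j i = 0)
  (Hpair : forall i j : I, pairing (alpha j) (coroot i) = (A i j)%:~R)
  (Hindec : indecomposable A) (u : 'rV[R]_n) (j0 : I)
  (Hj0 : pairing (alpha j0) u != 0) :
  forall i, exists w, W_sub alpha coroot [set: I] w /\ pairing (alpha i) (u *m w) != 0.
Proof.
move=> i; have /connectP [p Hp Hl] := Hindec i j0.
elim: p i Hp Hl => [|y p IH] x /=.
  move=> _ <-; exists 1%:M; split; [exact: W_sub1 | by rewrite mulmx1].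
case/andP=> Hxy Hp Hl; have [w [Hw Hyw]] := IH y Hp Hl.
have [Hx|Hx] := boolP (pairing (alpha x) (u *m w) != 0); first by exists w.
exists (w *m refl_mx (alpha y) (coroot y)); split; first by apply: W_subR; rewrite ?inE.
rewrite mulmxA mulmx_refl pairingB pairingZ Hpair.
move/negPn: Hx => /eqP ->; rewrite sub0r oppr_eq0 mulf_neq0 //.
rewrite intr_eq0; apply/eqP => H; move: Hxy; rewrite (proj1 (Hsym y x) H).
by rewrite eqxx.
Qed.

Lemma coroot_fin (R : realFieldType) (n : nat) (I : finType)
  (alpha : I -> 'cV[R]_n) (coroot : I -> 'rV[R]_n) (K : {set I}) (u : 'rV[R]_n)
  (Hu0 : forall i, i \in K -> pairing (alpha i) u = 0)
  (Hall : forall w, W_sub alpha coroot [set: I] w ->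
      FinM (W_sub alpha coroot K) (u *m w))
  (Hgood : forall i, exists w, W_sub alpha coroot [set: I] w /\ pairing (alpha i) (u *m w) != 0) :
  forall i, FinM (W_sub alpha coroot K) (coroot i).
Proof.
have Hd : forall w, W_sub alpha coroot [set: I] w ->
    FinM (W_sub alpha coroot K) (u *m w - u).
  move=> w Hw; have [l Hl] := Hall w Hw.
  exists [seq y - u | y <- l] => Z [x [Px ->]].
  rewrite mulmxBl (W_sub_fix Hu0 Px); apply: map_f; apply: Hl; by exists x.
move=> i; have [w [Hw Hne]] := Hgood i.
have Hw' : W_sub alpha coroot [set: I] (w *m refl_mx (alpha i) (coroot i)).
  by apply: W_subR; rewrite ?inE.
have -> : coroot i = (pairing (alpha i) (u *m w))^-1 *:
   ((u *m w - u) + (-1) *: (u *m (w *m refl_mx (alpha i) (coroot i)) - u)).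
  rewrite mulmxA mulmx_refl scaleN1r.
  set a := u *m w; set p := pairing _ a.
  have -> : a - u + - (a - p *: coroot i - u) = p *: coroot i.
    by rewrite opprB addrA subrK opprB addrC subrK.
  by rewrite scalerA mulVf // scale1r.
apply: FinMZ; apply: FinMD; first exact: Hd.
by apply: FinMZ; apply: Hd.
Qed.

Definition decP (P : Prop) : bool :=
  if excluded_middle_informative P then true else false.

Lemma decPP (P : Prop) : reflect P (decP P).
Proof. by rewrite /decP; case: excluded_middle_informative => H; constructor. Qed.

Lemma dot_ge0 (R : realFieldType) (n : nat) (v : 'rV[R]_n) : 0 <= (v *m v^T) 0 0.
Proof.
rewrite mxE; apply: sumr_ge0 => i _; rewrite mxE -expr2; exact: sqr_ge0.
Qed.

Lemma dot_eq0 (R : realFieldType) (n : nat) (v : 'rV[R]_n) : (v *m v^T) 0 0 = 0 -> v = 0.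
Proof.
rewrite mxE => H; apply/rowP => i; rewrite mxE.
have H0 : forall j : 'I_n, true -> 0 <= v 0 j * v^T j 0.
  by move=> j _; rewrite mxE -expr2 sqr_ge0.
have := @psumr_eq0P R _ xpredT (fun j => v 0 j * v^T j 0) H0 H i isT.
by rewrite mxE => /eqP; rewrite mulf_eq0 orbb => /eqP.
Qed.

Definition qf (R : fieldType) m (Qm : 'M[R]_m) (i : 'I_m) :=
  ((delta_mx 0 i : 'rV[R]_m) *m Qm *m (delta_mx 0 i : 'rV[R]_m)^T) 0 0.

Lemma form_exists (R : realFieldType) (n m : nat) (I : finType)
  (alpha : I -> 'cV[R]_n) (coroot : I -> 'rV[R]_n) (K : {set I})
  (Cmat : 'M[R]_(m, n)) (j : I -> 'I_m)
  (Hfree : forall a : 'rV[R]_m, a *m Cmat = 0 -> a = 0)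
  (HF : FinM (W_sub alpha coroot K) Cmat)
  (Hj : forall k, k \in K -> row (j k) Cmat = coroot k)
  (H2 : forall k, k \in K -> pairing (alpha k) (coroot k) = 2) :
  exists Qm : 'M[R]_m, Qm \in unitmx /\
    forall k, k \in K ->
      (qf Qm (j k) != 0) /\
      Cmat *m alpha k = (2 / qf Qm (j k)) *: (Qm *m (delta_mx 0 (j k) : 'rV[R]_m)^T).
Proof.
have [l Hl] := HF.
pose Pz (Z : 'M[R]_(m, n)) := exists x, W_sub alpha coroot K x /\ Z = Cmat *m x.
pose G := undup [seq Z <- l | decP (Pz Z)].
have memG Z : Z \in G <-> Pz Z.
  rewrite mem_undup mem_filter; split; first by case/andP => /decPP.
  by move=> H; rewrite (Hl Z H) andbT; apply/decPP.
have uG : uniq G by apply: undup_uniq.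
pose Qm := \sum_(Z <- G) Z *m Z^T.
have CG : Cmat \in G by apply/memG; exists 1%:M; split; [exact: W_sub1|rewrite mulmx1].
have Qpos (a : 'rV[R]_m) : (a *m Qm *m a^T) 0 0 = 0 -> a = 0.
  rewrite /Qm mulmx_sumr mulmx_suml summxE (bigD1_seq Cmat) //= => H.

  apply: Hfree; apply: dot_eq0.
  have Hge : forall Z : 'M[R]_(m, n), 0 <= (a *m (Z *m Z^T) *m a^T) 0 0.
    by move=> Z; rewrite !mulmxA -mulmxA -trmx_mul; exact: dot_ge0.
  have /eqP := H; rewrite paddr_eq0 ?Hge //; last by apply: sumr_ge0 => Z _.
  by case/andP=> /eqP; rewrite !mulmxA -mulmxA -trmx_mul.
have Qunit : Qm \in unitmx.
  rewrite -row_free_unit -kermx_eq0; apply/eqP/row_matrixP => i.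
  rewrite row0; apply: Qpos.
  have : (kermx Qm <= kermx Qm)%MS by [].
  move/sub_kermxP => /(congr1 (row i)); rewrite row0 row_mul => ->.
  by rewrite mul0mx mxE.
exists Qm; split => // k kK.
pose e : 'rV[R]_m := delta_mx 0 (j k).
pose g := Cmat *m alpha k.
pose Ek := refl_mx g e.
have eg : e *m g = (2 : R)%:M.
  rewrite /e /g mulmxA -rowE Hj // {1}(mx11_scalar (_ *m _)).
  by move: (H2 k kK); rewrite /pairing => ->.
have EE : Ek *m Ek = 1%:M.
  rewrite /Ek /refl_mx mulmxBl mul1mx mulmxBr mulmx1.
  rewrite -[g *m e *m _]mulmxA (mulmxA e g e) eg.
  rewrite mul_scalar_mx -scalemxAr; set X := g *m e.
  rewrite scaler_nat mulr2n (_ : X - (X + X) = - X); last first.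
    by rewrite opprD addrA subrr sub0r.
  by rewrite opprK subrK.
pose rk := refl_mx (alpha k) (coroot k).
have ECm : Ek *m Cmat = Cmat *m rk.
  rewrite /Ek /rk /refl_mx mulmxBl mulmxBr mul1mx mulmx1 -mulmxA /e -rowE Hj //.
  by rewrite /g mulmxA.
have clos Z : Z \in G -> Ek *m Z \in G.
  move/memG => [x [Wx ->]]; apply/memG; exists (rk *m x); split.
    exact: W_subL.
  by rewrite mulmxA ECm mulmxA.
have EK : cancel (@mulmx R m m n Ek) (@mulmx R m m n Ek) by move=> Z; rewrite mulmxA EE mul1mx.
have Hperm : perm_eq (map (@mulmx R m m n Ek) G) G.
  apply: uniq_perm => //; first by rewrite (map_inj_uniq (can_inj EK)).
  move=> Z; apply/mapP/idP => [[Z' Z'G ->]|ZG]; first exact: clos.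
  by exists (Ek *m Z); [exact: clos | rewrite EK].
have INV : Ek *m Qm *m Ek^T = Qm.
  apply: esym; rewrite /Qm mulmx_sumr mulmx_suml.
  rewrite -(perm_big _ Hperm) big_map; apply: eq_bigr => Z _.
  by rewrite trmx_mul !mulmxA.
pose p := Qm *m e^T.
pose q := (e *m Qm *m e^T) 0 0.
have eE : e *m Ek = - e.
  rewrite /Ek /refl_mx mulmxBr mulmx1 mulmxA eg mul_scalar_mx.
  by rewrite scaler_nat mulr2n opprD addrA subrr sub0r.
have Hq : q != 0.
  apply/eqP => /Qpos /rowP /(_ (j k)); rewrite /e !mxE !eqxx /=.
  by move/eqP; rewrite oner_eq0.
split; first exact: Hq.
have H1 : - (Ek *m p) = p.
  rewrite /p -{2}INV -(mulmxA _ Ek^T) -trmx_mul eE linearN mulmxN.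
  by rewrite mulmxA.
have H2' : Ek *m p = p - q *: g.
  rewrite /Ek /refl_mx mulmxBl mul1mx -mulmxA /p.
  rewrite (mulmxA e Qm) (mx11_scalar (e *m Qm *m e^T)).
  by rewrite mul_mx_scalar.
move: H1; rewrite H2' opprB => /(congr1 (fun M => M + p)); rewrite subrK => H3.
rewrite -/g mulrC -scalerA scaler_nat mulr2n -H3 scalerA mulVf // scale1r.
by [].
Qed.

Lemma W_finite (R : realFieldType) (n m : nat) (I : finType)
  (alpha : I -> 'cV[R]_n) (coroot : I -> 'rV[R]_n) (K : {set I})
  (Cmat : 'M[R]_(m, n)) (j : I -> 'I_m) (Qm : 'M[R]_m)
  (HF : FinM (W_sub alpha coroot K) Cmat)
  (Hinj : {in K &, injective j})
  (HQ : Qm \in unitmx)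
  (Hg : forall k, k \in K -> (qf Qm (j k) != 0) /\
      Cmat *m alpha k = (2 / qf Qm (j k)) *: (Qm *m (delta_mx 0 (j k) : 'rV[R]_m)^T)) :
  finite_pred (W_sub alpha coroot K).
Proof.
have surj (v : 'rV[R]_n) : exists a : 'rV[R]_m,
    forall k, k \in K -> pairing (alpha k) (a *m Cmat) = pairing (alpha k) v.
  pose c k := pairing (alpha k) v / (2 / qf Qm (j k)).
  pose b : 'rV[R]_m := \row_i \sum_(k | (k \in K) && (j k == i)) c k.
  exists (b *m invmx Qm) => k kK.
  have Hq := proj1 (Hg k kK).
  rewrite /pairing -(mulmxA _ Cmat) (proj2 (Hg k kK)).
  rewrite -scalemxAr mxE mulmxA mulmxKV // trmx_delta -colE !mxE.
  rewrite (big_pred1 k); first rewrite /c mulrC divfK //.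
      by rewrite /pairing mxE.
    by rewrite mulf_neq0 ?invr_eq0 // pnatr_eq0.
  move=> k' /=; apply/andP/eqP => [[k'K /eqP]|->]; last by rewrite kK eqxx.
  exact: Hinj.
have det x x' : W_sub alpha coroot K x -> W_sub alpha coroot K x' ->
    Cmat *m x = Cmat *m x' -> x = x'.
  move=> Wx Wx' HC; apply/row_matrixP => i; rewrite !rowE.
  set v : 'rV[R]_n := delta_mx 0 i.
  have [a Ha] := surj v.
  have Hfix : forall y, W_sub alpha coroot K y -> v *m y = (v - a *m Cmat) + a *m Cmat *m y.
    move=> y Wy; rewrite -{1}(subrK (a *m Cmat) v) mulmxDl (W_sub_fix _ Wy) //.
    by move=> k kK; rewrite pairingB Ha // subrr.
  by rewrite (Hfix x Wx) (Hfix x' Wx') -!mulmxA HC.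
have [l Hl] := HF.
pose f (Z : 'M[R]_(m, n)) := epsilon (inhabits 0) (fun x => W_sub alpha coroot K x /\ Z = Cmat *m x).
exists [seq f Z | Z <- l] => x Wx.
have Hex : exists y, W_sub alpha coroot K y /\ Cmat *m x = Cmat *m y by exists x.
have [Wf Hf] := epsilon_spec (inhabits 0) _ Hex.
have -> : x = f (Cmat *m x) by apply: det => //.
by apply: map_f; apply: Hl; exists x.
Qed.

Unset Implicit Arguments. Set Strict Implicit.

Theorem mainTheorem12 (R : realFieldType) (n : nat) (I : finType)
  (A : I -> I -> int) (alpha : I -> 'cV[R]_n) (coroot : I -> 'rV[R]_n)
  (HA : is_GCM A)
  (Halpha_free : free [seq alpha i | i <- enum I])
  (Hcoroot_free : free [seq coroot i | i <- enum I])
  (Hpair : forall i j : I, pairing (alpha j) (coroot i) = (A i j)%:~R)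
  (Hindec : indecomposable A)
  (K : {set I}) (HK : K \proper [set: I])
  (HWK : ~ finite_pred (W_sub alpha coroot K))
  (u : 'rV[R]_n)
  (Hu0 : forall i, i \in K -> pairing (alpha i) u = 0)
  (Hupos : forall i, i \notin K -> 0 < pairing (alpha i) u) :
  exists w : 'M[R]_n, W_sub alpha coroot [set: I] w /\
    ~ finite_pred (fun y : 'rV[R]_n =>
        exists x : 'M[R]_n, W_sub alpha coroot K x /\ y = u *m w *m x).
Proof.
apply: NNPP => Hno; apply: HWK.
have Hall : forall w, W_sub alpha coroot [set: I] w ->
    FinM (W_sub alpha coroot K) (u *m w).
  move=> w Hw; apply: NNPP => Hnf; apply: Hno; exists w; split => //.
case: HA => Hdiag Hoff Hsym.
have [_ [j0 _ Hj0]] := properP HK.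
have Hj0' : pairing (alpha j0) u != 0 by rewrite gt_eqF // Hupos.
have Hgood := good_all Hsym Hpair Hindec Hj0'.
have Hcf := coroot_fin Hu0 Hall Hgood.
pose Xs := [seq coroot i | i <- enum I].
pose m := size Xs.
pose Cmat : 'M[R]_(m, n) := \matrix_(r < m) Xs`_r.
have HF : FinM (W_sub alpha coroot K) Cmat.
  apply: FinM_rows => r; rewrite rowK.
  have : Xs`_r \in Xs by apply: mem_nth.
  by case/mapP => i _ ->; apply: Hcf.
have Hfree : forall a : 'rV[R]_m, a *m Cmat = 0 -> a = 0.
  move=> a Ha; apply/rowP => r; rewrite mxE.
  have := @freeP _ _ _ (in_tuple Xs) Hcoroot_free => /(_ (fun r => a 0 r)) H; apply: H.
  rewrite -[RHS]Ha mulmx_sum_row; apply: eq_bigr => i _; by rewrite rowK.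
have Hidx : forall k, (index (coroot k) Xs < m)%N.
  by move=> k; rewrite index_mem; apply: map_f; rewrite mem_enum.
pose j k := Ordinal (Hidx k).
have Hj : forall k, k \in K -> row (j k) Cmat = coroot k.
  move=> k _; rewrite rowK /= nth_index //; apply: map_f; by rewrite mem_enum.
have H2 : forall k, k \in K -> pairing (alpha k) (coroot k) = 2.
  by move=> k _; rewrite Hpair Hdiag.
have Hinj : {in K &, injective j}.
  move=> k k' kK k'K Hkk; have Hc : coroot k = coroot k'.
    by rewrite -(Hj k kK) Hkk Hj.
  apply/eqP; apply: contraT => Hne.
  have : (0:R) < 2 by [].
  rewrite -(H2 k kK) Hc Hpair ltr0z ltNge Hoff //.
  by rewrite eq_sym.
have [Qm [HQ Hg]] := form_exists Hfree HF Hj H2.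
exact: (W_finite HF Hinj HQ Hg).
Qed.
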